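(* The sheaf $\mathcal{C}_{X_{\mathrm{crs}}}$ is not soft: for the closed subset $A=\bigcup_{n\ge1}e_n^0\subset X_{\mathrm{crs}}$ with inclusion $j:A\to X_{\mathrm{crs}}$, the restriction map $H^0(X_{\mathrm{crs}},\mathcal{C}_{X_{\mathrm{crs}}})\to H^0(A,j^{-1}\mathcal{C}_{X_{\mathrm{crs}}})$ is not surjective.
   Context: Let $X$ be the following 2-dimensional CW-complex. Its 0-cells are $e_n^0$, $n\ge 0$; the point $x=e_0^0$ is called the origin. For each $n\ge1$ there are two 1-cells $e_n^1, e_{-n}^1$, each joining $x$ to $e_n^0$, so that $e_0^0\cup e_n^0\cup e_n^1\cup e_{-n}^1$ is homeomorphic to a circle; for each $n\ge1$ a 2-cell $e_n^2$ is attached via a homeomorphism $\varphi_n:S^1\to e_0^0\cup e_n^0\cup e_n^1\cup e_{-n}^1$. Thus each closed 2-cell $\overline{e_n^2}$ is a closed disk having $x$ and $e_n^0$ on its boundary, and $X$ is a wedge at $x$ of countably many closed disks, carrying the CW (weak) topology. The coarser topology on the set $X$ consists of all subsets $U\subset X$ that are open in the CW-topology and either do not contain $x$, or contain $\overline{e_n^2}\smallsetminus e_n^0$ for all but finitely many $n\ge1$. The set $X$ with this coarser topology is denoted $X_{\mathrm{crs}}$. $\mathcal{C}_{X_{\mathrm{crs}}}$ denotes the sheaf of continuous real-valued functions on $X_{\mathrm{crs}}$; $j^{-1}$ is the inverse image sheaf. *)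

(* Defs.v *)
From Stdlib Require Import Reals Classical.
Open Scope R_scope.

(** Each closed 2-cell
    closure is modelled by the closed unit disk in R^2; the origin x
    corresponds to the boundary point (-1,0) of every disk, and the
    0-cell e_n^0 to the boundary point (1,0) of the n-th disk (n >= 1). *)
Inductive Xt : Type := Orig | Pt (n : nat) (u v : R).

Definition inDisk (u v : R) : Prop := u * u + v * v <= 1.

Definition inX (t : Xt) : Prop :=
  match t with
  | Orig => True
  | Pt n u v => (1 <= n)%nat /\ inDisk u v /\ ~ (u = -1 /\ v = 0)
  end.

Definition X : Type := {t : Xt | inX t}.

Definition origin : X := exist inX Orig I.

Definition e0 (n : nat) : Xt := Pt n 1 0.

Definition liftU (U : X -> Prop) (t : Xt) : Prop :=
  exists z : X, proj1_sig z = t /\ U z.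

(** Preimage of U under the characteristic map phi_n : closed disk -> X. *)
Definition cellPre (n : nat) (U : X -> Prop) (u v : R) : Prop :=
  ((u = -1 /\ v = 0) /\ liftU U Orig) \/
  (~ (u = -1 /\ v = 0) /\ liftU U (Pt n u v)).

Definition open_in_disk (S : R -> R -> Prop) : Prop :=
  forall u v, inDisk u v -> S u v ->
    exists eps, 0 < eps /\
      forall u' v', inDisk u' v' ->
        (u' - u) * (u' - u) + (v' - v) * (v' - v) < eps * eps -> S u' v'.

Definition cw_open (U : X -> Prop) : Prop :=
  forall n, (1 <= n)%nat -> open_in_disk (cellPre n U).

Definition crs_open (U : X -> Prop) : Prop :=
  cw_open U /\
  (~ U origin \/
   exists N : nat, forall n, (N <= n)%nat -> (1 <= n)%nat ->
     forall u v, inDisk u v -> ~ (u = 1 /\ v = 0) -> cellPre n U u v).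

Definition isA (z : X) : Prop :=
  exists n, (1 <= n)%nat /\ proj1_sig z = e0 n.

Definition continuous_on (V : X -> Prop) (f : X -> R) : Prop :=
  forall O : R -> Prop, open_set O ->
    exists U, crs_open U /\ forall z, V z -> (O (f z) <-> U z).

Definition same_germ (z : X) (V1 : X -> Prop) (f1 : X -> R)
  (V2 : X -> Prop) (f2 : X -> R) : Prop :=
  exists W, crs_open W /\ W z /\
    forall y, W y -> V1 y /\ V2 y /\ f1 y = f2 y.

(** A global section of j^{-1} C_{X_crs} over A: for every a in A a germ
    at a (represented by an open neighbourhood V a and a continuous f a on it),
    such that locally the germs are induced by a single continuous function on
    an open subset of X_crs. *)
Definition jinv_section (V : X -> X -> Prop) (f : X -> X -> R) : Prop :=
  (forall a, isA a -> crs_open (V a) /\ V a a /\ continuous_on (V a) (f a)) /\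
  (forall a, isA a -> exists (W : X -> Prop) (g : X -> R),
      crs_open W /\ W a /\ continuous_on W g /\
      forall b, isA b -> W b -> same_germ b W g (V b) (f b)).

Definition in_restriction_image (V : X -> X -> Prop) (f : X -> X -> R) : Prop :=
  exists g : X -> R, continuous_on (fun _ => True) g /\
    forall a, isA a -> same_germ a (fun _ => True) g (V a) (f a).

(* Main.v *)
Require Import Defs.
From Stdlib Require Import Reals Classical Lra Lia ProofIrrelevance.
Open Scope R_scope.

Lemma sig_eq_proj (z z' : X) : proj1_sig z = proj1_sig z' -> z = z'.
Proof.
  destruct z as [t p], z' as [t' p']; simpl; intros ->.
  f_equal; apply proof_irrelevance.
Qed.

Lemma origin_notA : ~ isA origin.
Proof. intros [m [_ H]]. discriminate H. Qed.

Lemma cell_notA (U : X -> Prop) n u v :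
  (1 <= n)%nat -> (forall z, ~ isA z -> U z) -> inDisk u v -> ~ (u = 1 /\ v = 0) ->
  cellPre n U u v.
Proof.
  intros Hn HU Hd Hne.
  destruct (classic (u = -1 /\ v = 0)) as [Hm|Hm].
  - left. split; [exact Hm|]. exists origin. split; [reflexivity|].
    apply HU, origin_notA.
  - right. split; [exact Hm|].
    exists (exist inX (Pt n u v) (conj Hn (conj Hd Hm))). split; [reflexivity|].
    apply HU. intros [m [_ Hq]]. simpl in Hq. unfold e0 in Hq.
    injection Hq; intros; apply Hne; split; assumption.
Qed.

Lemma crs_open_big (U : X -> Prop) : (forall z, ~ isA z -> U z) -> crs_open U.
Proof.
  intros HU.
  assert (Hcw : cw_open U).
  { intros n Hn u v Hd Hc.
    destruct (classic (cellPre n U 1 0)) as [H1|H1].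
    - exists 1. split; [lra|]. intros u' v' Hd' _.
      destruct (classic (u' = 1 /\ v' = 0)) as [[-> ->]|Hne]; [exact H1|].
      apply cell_notA; auto.
    - assert (Hne : ~ (u = 1 /\ v = 0)).
      { intros [-> ->]. exact (H1 Hc). }
      set (d := (u - 1) * (u - 1) + v * v).
      assert (Hd0 : 0 < d).
      { unfold d. destruct (Req_dec v 0) as [Hv|Hv].
        - assert (u <> 1) by (intro; apply Hne; split; auto). subst v.
          assert (Hu1 : u - 1 <> 0) by lra. pose proof (Rsqr_pos_lt (u-1) Hu1) as Hs.
          unfold Rsqr in Hs. lra.
        - pose proof (Rsqr_pos_lt v Hv) as Hs. unfold Rsqr in Hs.
          pose proof (Rle_0_sqr (u-1)) as Hs2. unfold Rsqr in Hs2. lra. }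
      exists (sqrt d). split; [apply sqrt_lt_R0; lra|].
      intros u' v' Hd' Hlt. rewrite sqrt_sqrt in Hlt by lra.
      apply cell_notA; auto. intros [-> ->]. unfold d in Hlt. nra. }
  split; [exact Hcw|]. right. exists 0%nat. intros n _ Hn u v Hd Hne.
  apply cell_notA; auto.
Qed.

Lemma crs_open_empty : crs_open (fun _ => False).
Proof.
  split.
  - intros n Hn u v Hd Hc. exfalso.
    destruct Hc as [[_ [z [_ F]]]|[_ [z [_ F]]]]; exact F.
  - left. auto.
Qed.

Lemma const_cont (V : X -> Prop) (c : R) : continuous_on V (fun _ => c).
Proof.
  intros O _. destruct (classic (O c)) as [H|H].
  - exists (fun _ => True). split; [apply crs_open_big; auto|]. intros; tauto.
  - exists (fun _ => False). split; [apply crs_open_empty|]. intros; tauto.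
Qed.

Definition idx (z : X) : R :=
  match proj1_sig z with Orig => 0 | Pt n _ _ => INR n end.

Definition Wa (a : X) : X -> Prop := fun z => ~ isA z \/ z = a.

Lemma En_in (n : nat) : (1 <= n)%nat -> inX (Pt n 1 0).
Proof. intros Hn. simpl. unfold inDisk. repeat split; [auto|lra|lra]. Qed.

Theorem mainTheorem9 :
  crs_open (fun z => ~ isA z) /\
  exists (V : X -> X -> Prop) (f : X -> X -> R),
    jinv_section V f /\ ~ in_restriction_image V f.
Proof.
  split; [apply crs_open_big; auto|].
  exists Wa, (fun a _ => idx a). split.
  - split.
    + intros a _. split; [apply crs_open_big; unfold Wa; auto|].
      split; [right; reflexivity|apply const_cont].
    + intros a Ha. exists (Wa a), (fun _ => idx a).
      split; [apply crs_open_big; unfold Wa; auto|].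
      split; [right; reflexivity|]. split; [apply const_cont|].
      intros b Hb [Hnb|Hba]; [contradiction|]. subst b.
      exists (Wa a). split; [apply crs_open_big; unfold Wa; auto|].
      split; [right; reflexivity|]. intros y Hy; auto.
  - intros [g [Hg Hgerm]].
    assert (Hval : forall n (Hn : (1 <= n)%nat),
               g (exist inX (Pt n 1 0) (En_in n Hn)) = INR n).
    { intros n Hn. set (a := exist inX (Pt n 1 0) (En_in n Hn)).
      assert (Ha : isA a) by (exists n; split; auto).
      destruct (Hgerm a Ha) as [W [_ [HWa HW]]].
      destruct (HW a HWa) as [_ [_ E]]. rewrite E. reflexivity. }
    set (g0 := g origin).
    destruct (Hg (fun r => g0 - 1 < r < g0 + 1)) as [U [[_ HUc] HU]].
    { intros r Hr. exists (mkposreal (Rmin (r - (g0-1)) (g0+1 - r)) ltac:(apply Rmin_glb_lt; lra)).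
      intros y Hy. unfold disc in Hy; simpl in Hy. apply Rabs_def2 in Hy.
      pose proof (Rmin_l (r - (g0-1)) (g0+1 - r)). pose proof (Rmin_r (r - (g0-1)) (g0+1 - r)). lra. }
    assert (HUo : U origin) by (apply (HU origin I); unfold g0; lra).
    destruct HUc as [HnU|[N HN]]; [contradiction|].
    destruct (Hg (fun r => g0 + 1 < r)) as [U2 [[HU2c _] HU2]].
    { intros r Hr. exists (mkposreal (r - (g0+1)) ltac:(lra)).
      intros y Hy. unfold disc in Hy; simpl in Hy. apply Rabs_def2 in Hy. lra. }
    destruct (INR_unbounded (g0 + 1)) as [k Hk].
    set (n := (k + N + 1)%nat).
    assert (Hn : (1 <= n)%nat) by (unfold n; lia).
    assert (HnN : (N <= n)%nat) by (unfold n; lia).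
    assert (Hkn : INR k <= INR n) by (apply le_INR; unfold n; lia).
    set (a := exist inX (Pt n 1 0) (En_in n Hn)).
    assert (HU2a : U2 a) by (apply (HU2 a I); unfold a; rewrite Hval; lra).
    assert (Hc10 : cellPre n U2 1 0).
    { right. split; [lra|]. exists a; split; [reflexivity|exact HU2a]. }
    destruct (HU2c n Hn 1 0 ltac:(unfold inDisk; lra) Hc10) as [eps [Heps Hop]].
    set (dl := Rmin (eps / 2) 1).
    assert (Hdl0 : 0 < dl) by (unfold dl; apply Rmin_glb_lt; lra).
    assert (Hdl1 : dl <= 1) by (unfold dl; apply Rmin_r).
    assert (Hdle : dl < eps) by (unfold dl; pose proof (Rmin_l (eps/2) 1); lra).
    assert (Hdisk : inDisk (1 - dl) 0) by (unfold inDisk; nra).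
    assert (C2 := Hop (1 - dl) 0 Hdisk ltac:(nra)).
    assert (C1 := HN n HnN Hn (1 - dl) 0 Hdisk ltac:(lra)).
    destruct C2 as [[[? _] _]|[_ [z [Hz HUz]]]]; [lra|].
    destruct C1 as [[[? _] _]|[_ [z' [Hz' HUz']]]]; [lra|].
    assert (z = z') by (apply sig_eq_proj; congruence). subst z'.
    apply (HU2 z I) in HUz. apply (HU z I) in HUz'. lra.
Qed.
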